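(* Let $L$ be a lattice. Then the following are equivalent: (i) $L$ has permutable congruences; (ii) for all elements $a,b,c\in L$ with $a\leq c\leq b$, there exists $x\in L$ such that $a\equiv_{\Theta(c,b)}x$ and $x\equiv_{\Theta(a,c)}b$.
   Context: For binary relations $\alpha,\beta$ on a set $A$, $\alpha\beta=\{(x,y)\in A\times A : \exists z\in A,\ (x,z)\in\alpha \text{ and } (z,y)\in\beta\}$. We write $x\equiv_\alpha y$ for $(x,y)\in\alpha$. For a lattice $L$ and $x,y\in L$, $\Theta(x,y)=\Theta_L(x,y)$ denotes the least congruence of $L$ identifying $x$ and $y$. A lattice $L$ has permutable congruences if $\alpha\beta=\beta\alpha$ for all congruences $\alpha,\beta$ of $L$. *)

(* Defs.v *)
From mathcomp Require Import all_boot all_order.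
Set Implicit Arguments. Unset Strict Implicit. Unset Printing Implicit Defensive.
Import Order.LTheory.
Local Open Scope order_scope.

Definition lrel (T : Type) := T -> T -> Prop.

Definition relprod (T : Type) (alpha beta : lrel T) : lrel T :=
  fun x y => exists z, alpha x z /\ beta z y.

Definition is_congruence (d : Order.disp_t) (L : latticeType d) (th : lrel L) : Prop :=
  [/\ (forall x, th x x),
      (forall x y, th x y -> th y x),
      (forall x y z, th x y -> th y z -> th x z),
      (forall x y u v, th x y -> th u v -> th (x `&` u) (y `&` v)) &
      (forall x y u v, th x y -> th u v -> th (x `|` u) (y `|` v))].

Definition Theta (d : Order.disp_t) (L : latticeType d) (a b : L) : lrel L :=
  fun u v => forall th : lrel L, is_congruence th -> th a b -> th u v.

Definition permutable_congruences (d : Order.disp_t) (L : latticeType d) : Prop :=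
  forall alpha beta : lrel L, is_congruence alpha -> is_congruence beta ->
    forall x y, relprod alpha beta x y <-> relprod beta alpha x y.

(* Main.v *)
Require Import Defs.
From mathcomp Require Import all_boot all_order.
Import Order.LTheory.
Local Open Scope order_scope.

Lemma Theta_cong (d : Order.disp_t) (L : latticeType d) (a b : L) :
  is_congruence (Theta a b).
Proof.
split.
- by move=> x th [r _ _ _ _] _; apply: r.
- by move=> x y H th Hc Hab; case: (Hc) => _ s _ _ _; apply: s; apply: H.
- by move=> x y z H1 H2 th Hc Hab; case: (Hc) => _ _ t _ _; apply: t (H1 _ Hc Hab) (H2 _ Hc Hab).
- by move=> x y u v H1 H2 th Hc Hab; case: (Hc) => _ _ _ m _; apply: m (H1 _ Hc Hab) (H2 _ Hc Hab).
- by move=> x y u v H1 H2 th Hc Hab; case: (Hc) => _ _ _ _ j; apply: j (H1 _ Hc Hab) (H2 _ Hc Hab).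
Qed.

Lemma Theta_ab (d : Order.disp_t) (L : latticeType d) (a b : L) : Theta a b a b.
Proof. by move=> th _ H. Qed.

Lemma mxx (d : Order.disp_t) (L : latticeType d) (z : L) : z `&` z = z.
Proof. by rewrite meet_l. Qed.

Lemma e3 (d : Order.disp_t) (L : latticeType d) (x y z : L) :
  (y `&` z) `&` x = (x `&` z) `&` y.
Proof. by rewrite [LHS]meetC meetA [RHS]meetAC. Qed.

Lemma half (d : Order.disp_t) (L : latticeType d) :
  (forall a b c : L, a <= c -> c <= b ->
     exists x : L, Theta c b a x /\ Theta a c x b) ->
  forall alpha beta : lrel L, is_congruence alpha -> is_congruence beta ->
    forall x y, relprod alpha beta x y -> relprod beta alpha x y.
Proof.
move=> H al be Ha Hb x y [z [xz zy]].
case: (Ha) => ra sa ta ma ja; case: (Hb) => rb sb tb mb jb.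
set n := (x `&` z) `&` y.
have h1 : al x (x `&` z).
  by have := ma _ _ _ _ (ra x) xz; rewrite meet_l.
have h2 : be (x `&` z) n.
  by have := mb _ _ _ _ (rb (x `&` z)) zy; rewrite -meetA mxx.
have [w1 [n1 w1x]] : exists w1, Theta (x `&` z) x n w1 /\ Theta n (x `&` z) w1 x.
  by apply: H; [exact: leIl | exact: leIl].
have nw1 : al n w1 by apply: n1 => //; apply: sa.
have w1x' : be w1 x by apply: w1x => //; apply: sb.
have h3 : be y (y `&` z).
  by have := mb _ _ _ _ (rb y) (sb _ _ zy); rewrite meet_l.
have h4 : al (y `&` z) n.
  have := ma _ _ _ _ (ra (y `&` z)) (sa _ _ xz).
  by rewrite -meetA mxx /n e3.
have [w2 [n2 w2y]] : exists w2, Theta (y `&` z) y n w2 /\ Theta n (y `&` z) w2 y.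
  apply: H; last exact: leIl.
  by rewrite /n -e3; exact: leIl.
have nw2 : be n w2 by apply: n2 => //; apply: sb.
have w2y' : al w2 y by apply: w2y => //; apply: sa.
exists (w1 `|` w2); split.
- have := jb _ _ _ _ (sb _ _ w1x') nw2.
  by rewrite (@join_l _ _ x n) //; apply: le_trans (leIl _ _) (leIl _ _).
- have := ja _ _ _ _ (sa _ _ nw1) w2y'.
  by rewrite (@join_r _ _ n y) // /n; exact: leIr.
Qed.

Theorem proposition1p1 (d : Order.disp_t) (L : latticeType d) :
  permutable_congruences L <->
  (forall a b c : L, a <= c -> c <= b ->
     exists x : L, Theta c b a x /\ Theta a c x b).
Proof.
split.
- move=> P a b c ac cb.
  have : relprod (Theta a c) (Theta c b) a b by exists c; split; apply: (@Theta_ab _ L).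
  move/(P _ _ (@Theta_cong _ L a c) (@Theta_cong _ L c b)) => [x [h1 h2]].
  by exists x.
- move=> H al be Ha Hb x y; split; exact: half.
Qed.
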